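(* (a) If $x,y\in I$, then $xy\in I$ and $yx\in I$. (b) If $x,y\in\beta\mathbb{N}$ with $x\in I$ and $y\notin I$, then $xy\in I$ and $yx\in I$.
   Context: $\mathbb{N}=\{1,2,3,\dots\}$; $\beta\mathbb{N}$ is the set of ultrafilters on $\mathbb{N}$ (Stone–Čech compactification, naturals identified with principal ultrafilters), with multiplication: $A\in xy$ iff $\{n\in\mathbb{N}:A/n\in y\}\in x$, where $A/n=\{m:mn\in A\}$. For $A\subseteq\mathbb{N}$, $\overline{A}=\{x\in\beta\mathbb{N}:A\in x\}$. $P$ is the set of primes, $L_0=\{1\}$, $L_n=\{a_1\cdots a_n:a_i\in P\}$. $I=\bigcap_{i=0}^\infty\overline{\mathbb{N}\setminus L_i}$ (ultrafilters containing none of the $L_i$). *)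

(* Defs.v *)
From mathcomp Require Import all_boot.
Set Implicit Arguments. Unset Strict Implicit. Unset Printing Implicit Defensive.

(* Subsets of the naturals, as predicates on nat. The ambient set
   N = {1,2,3,...} is represented by the predicate [Npos]. *)
Definition nset := nat -> Prop.

Definition Npos : nset := fun n => 0 < n.

Definition is_ultrafilter (U : nset -> Prop) : Prop :=
  [/\ U Npos,
      ~ U (fun _ => False),
      (forall A B : nset, U A -> (forall n, A n -> B n) -> U B),
      (forall A B : nset, U A -> U B -> U (fun n => A n /\ B n))
    & (forall A : nset, U A \/ U (fun n => Npos n /\ ~ A n))].

Definition setdiv (A : nset) (n : nat) : nset := fun m => A (m * n).

Definition umul (x y : nset -> Prop) : nset -> Prop :=
  fun A => x (fun n => Npos n /\ y (setdiv A n)).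

(* L_i = { a_1 ... a_i : a_j prime }, with L_0 = {1} (empty product). *)
Definition L (i : nat) : nset :=
  fun n => exists s : seq nat, [/\ size s = i, all prime s & n = \prod_(p <- s) p].

Definition in_closure (A : nset) (x : nset -> Prop) : Prop := x A.

Definition inI (x : nset -> Prop) : Prop :=
  forall i : nat, in_closure (fun n => Npos n /\ ~ L i n) x.

(* Main.v *)
Require Import Defs.
From mathcomp Require Import all_boot.
From Stdlib Require Import Classical.

Lemma prime_in_prod p t : prime p -> all prime t -> p %| \prod_(q <- t) q -> p \in t.
Proof.
move=> pp; elim: t => [|q t IH] /=; first by rewrite big_nil Euclid_dvd1.
case/andP=> pq pt; rewrite big_cons Euclid_dvdM // in_cons.
case/orP=> [|/(IH pt) ->]; last by rewrite orbT.
by rewrite dvdn_prime2 // => ->.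
Qed.

Lemma L_gt0 i n : L i n -> 0 < n.
Proof.
case=> s [_ ps ->]; elim: s ps => [|q s IH] /=; first by rewrite big_nil.
by case/andP=> pq ps; rewrite big_cons muln_gt0 prime_gt0 // IH.
Qed.

Lemma L_mul a b m n : L a m -> L b n -> L (a + b) (m * n).
Proof.
case=> s [<- ps ->] [t [<- pt ->]]; exists (s ++ t).
by rewrite size_cat all_cat ps pt big_cat.
Qed.

Lemma L_uniq a b n : L a n -> L b n -> a = b.
Proof.
case=> s [<- ps ->] [t [<- pt]].
elim: s t ps pt => [|p s IH] t /=.
  rewrite big_nil; case: t => [|q t] //= _ /andP[pq pt].
  rewrite big_cons => /esym/eqP; rewrite muln_eq1 => /andP[/eqP q1 _].
  by rewrite q1 in pq.
case/andP=> pp ps pt; rewrite big_cons => E.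
have pin : p \in t by apply: prime_in_prod => //; rewrite -E dvdn_mulr.
have PR := perm_to_rem pin.
rewrite (perm_big _ PR) big_cons in E.
rewrite (perm_size PR) /=; congr S; apply: IH => //.
  by apply/allP=> q /mem_rem qt; move/allP: pt; apply.
by apply/eqP; rewrite -(eqn_pmul2l (prime_gt0 pp)) E.
Qed.

Lemma L_ex n : 0 < n -> exists i, L i n.
Proof.
elim: n {-2}n (leqnn n) => [|N IH] n le gt; first by case: n le gt.
case: (ltngtP n 1) => [n0|n1|->]; first by case: n n0 gt le.
- have pp : prime (pdiv n) by rewrite pdiv_prime.
  have E : n = pdiv n * (n %/ pdiv n) by rewrite mulnC divnK // pdiv_dvd.
  have [i Li] : exists i, L i (n %/ pdiv n).
    apply: IH.
      rewrite -ltnS; apply: leq_trans le; rewrite ltn_Pdiv // prime_gt1 //.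
    by rewrite divn_gt0 ?prime_gt0 // dvdn_leq // pdiv_dvd.
  exists (1 + i); rewrite E; apply: L_mul => //.
  by exists [:: pdiv n]; rewrite /= pp big_seq1.
- by exists 0, [::]; rewrite big_nil.
Qed.

Arguments L_uniq {a b n}.
Arguments L_mul {a b m n}.
Arguments L_gt0 {i n}.

Lemma thmA z y : is_ultrafilter z -> is_ultrafilter y -> inI y -> inI (umul z y).
Proof.
case=> zN _ zup _ _ [yN _ yup _ _] Hy i; rewrite /in_closure /umul.
apply: (zup _ _ zN) => n n0; split => //.
have [j Lj] := @L_ex n n0.
have key : forall m, 0 < m -> L i (m * n) -> exists k, L k m /\ k + j = i.
  move=> m m0 Lmn; have [k Lk] := @L_ex m m0; exists k; split => //.
  exact: (L_uniq (L_mul Lk Lj) Lmn).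
case: (leqP j i) => ji.
- apply: (yup _ _ (Hy (i - j))) => m [m0 nL]; split; first by rewrite /Npos muln_gt0 m0.
  move=> Lmn; have [k [Lk E]] := key m m0 Lmn; apply: nL.
  by have -> : i - j = k by rewrite -E addnK.
- apply: (yup _ _ yN) => m m0; split; first by rewrite /Npos muln_gt0 m0.
  move=> Lmn; have [k [Lk E]] := key m m0 Lmn.
  by move: ji; rewrite -E ltnNge leq_addl.
Qed.

Lemma thmB x y : is_ultrafilter x -> is_ultrafilter y -> inI x -> ~ inI y ->
  inI (umul x y).
Proof.
case=> xN _ xup _ _ [yN _ yup _ ydich] Hx Hy.
have [k yL] : exists k, y (L k).
  have [k nk] := not_all_ex_not _ _ Hy; exists k.
  case: (ydich (fun n => Npos n /\ ~ L k n)) => // H.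
  apply: (yup _ _ H) => n [n0 nn]; apply: NNPP => nL; exact: nn.
move=> i; rewrite /in_closure /umul.
have key : forall n, 0 < n -> ~ (k <= i /\ L (i - k) n) -> y (setdiv (fun m => Npos m /\ ~ L i m) n).
  move=> n n0 nL; have [j Lj] := @L_ex n n0.
  apply: (yup _ _ yL) => m Lm; have m0 := L_gt0 Lm.
  split; first by rewrite /Npos muln_gt0 m0.
  move=> Lmn; have E := L_uniq (L_mul Lm Lj) Lmn.
  by apply: nL; rewrite -E leq_addr addKn.
case: (leqP k i) => ki.
- apply: (xup _ _ (Hx (i - k))) => n [n0 nL]; split => //; apply: key => // [[_]]; exact: nL.
- apply: (xup _ _ xN) => n n0; split => //; apply: key => // [[]]; by rewrite leqNgt ki.
Qed.

Theorem theorem3p7 :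
  forall x y : nset -> Prop, is_ultrafilter x -> is_ultrafilter y ->
    (inI x -> inI y -> inI (umul x y) /\ inI (umul y x)) /\
    (inI x -> ~ inI y -> inI (umul x y) /\ inI (umul y x)).
Proof.
move=> x y ux uy; split=> Hx Hy; split; try exact: thmA.
exact: thmB.
Qed.
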